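(* Let $\phi\in UC(\mathbb{R}^{N+1})$ be almost periodic in the $m$-th variable, for some $m\in\{1,\dots,N+1\}$. Then from any real sequence $(s_n)_{n\in\mathbb{N}}$ one can extract a subsequence $(s_{n_k})_{k\in\mathbb{N}}$ such that, for every choice of $(X_1,\dots,X_{m-1},X_{m+1},\dots,X_{N+1})$, the sequence $\big(\phi(X_1,\dots,X_m+s_{n_k},\dots,X_{N+1})\big)_{k}$ converges uniformly in $X_m\in\mathbb{R}$.
   Context: $UC$ means uniformly continuous. A continuous $g:\mathbb{R}\to\mathbb{R}$ is almost periodic if from every real sequence $(s_n)$ one can extract a subsequence along which $g(\cdot+s_{n_k})$ converges uniformly on $\mathbb{R}$; $\phi$ on $\mathbb{R}^{N+1}$ is almost periodic in the $m$-th variable if for each fixed value of the other variables the function $X_m\mapsto\phi(\dots,X_m,\dots)$ is almost periodic. *)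

(* Defs.v *)
From Stdlib Require Import Reals Lra Lia.
From Stdlib Require Fin.
Open Scope R_scope.

Definition Pt (N : nat) := Fin.t (S N) -> R.

Definition close {N : nat} (X Y : Pt N) (d : R) : Prop :=
  forall i, Rabs (X i - Y i) < d.

Definition UC {N : nat} (phi : Pt N -> R) : Prop :=
  forall eps, 0 < eps -> exists delta, 0 < delta /\
    forall X Y, close X Y delta -> Rabs (phi X - phi Y) < eps.

Definition setc {N : nat} (m : Fin.t (S N)) (X : Pt N) (t : R) : Pt N :=
  fun i => if Fin.eq_dec i m then t else X i.

Definition strictly_increasing (f : nat -> nat) : Prop :=
  forall k, (f k < f (S k))%nat.

Definition unif_conv (u : nat -> R -> R) : Prop :=
  exists h : R -> R, forall eps, 0 < eps -> exists K : nat,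
    forall k, (K <= k)%nat -> forall x, Rabs (u k x - h x) < eps.

Definition almost_periodic (g : R -> R) : Prop :=
  continuity g /\
  forall s : nat -> R, exists sub : nat -> nat, strictly_increasing sub /\
    unif_conv (fun k x => g (x + s (sub k))).

Definition ap_in_var {N : nat} (m : Fin.t (S N)) (phi : Pt N -> R) : Prop :=
  forall X : Pt N, almost_periodic (fun t => phi (setc m X t)).

(* Main.v *)
Require Import Defs.
From Stdlib Require Import Reals Lra Lia Cantor ZArith ClassicalEpsilon.
From Stdlib Require Fin.
Open Scope R_scope.
Lemma znat z : INR (Z.to_nat z) - INR (Z.to_nat (-z)) = IZR z.
Proof. destruct z; simpl. lra. rewrite INR_IPR. unfold IZR. lra. rewrite INR_IPR. unfold IZR. lra. Qed.
Definition q (n : nat) : R := let (a,p) := Cantor.of_nat n in let (b,c) := Cantor.of_nat a in (INR b - INR c) / INR (S p).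
Lemma q_dense x delta : 0 < delta -> exists n, Rabs (x - q n) < delta.
Proof.
  intros Hd.
  destruct (archimed (/delta)) as [H1 H2].
  set (p := Z.to_nat (up (/delta))).
  assert (HP : / delta < INR (S p)).
  { unfold p. destruct (ZArith_dec.Z_lt_le_dec (up (/delta)) 0) as [Hn|Hn].
    - apply IZR_lt in Hn. pose proof (Rinv_0_lt_compat _ Hd). lra.
    - rewrite S_INR, INR_IZR_INZ, Z2Nat.id by lia. lra. }
  set (P := INR (S p)) in *.
  assert (HP0 : 0 < P) by (pose proof (Rinv_0_lt_compat _ Hd); lra).
  assert (HPd : / P < delta).
  { rewrite <- (Rinv_inv delta). apply Rinv_lt_contravar; [|lra].
    apply Rmult_lt_0_compat; auto. apply Rinv_0_lt_compat; auto. }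
  destruct (archimed (x * P)) as [H3 H4].
  set (z := up (x*P)) in *.
  exists (Cantor.to_nat (Cantor.to_nat (Z.to_nat z, Z.to_nat (-z)), p)).
  unfold q. rewrite !Cantor.cancel_of_to. fold P. rewrite znat.
  assert (E : x - IZR z / P = - ((IZR z - x * P) * / P)) by (field; lra).
  rewrite E, Rabs_Ropp, Rabs_right.
  - apply Rle_lt_trans with (1 * / P); [|lra].
    apply Rmult_le_compat_r; [left; apply Rinv_0_lt_compat; auto| lra].
  - apply Rle_ge, Rmult_le_pos; [lra| left; apply Rinv_0_lt_compat; auto].
Qed.
Definition dense {N} (e : nat -> Pt N) := forall (X : Pt N) delta, 0<delta -> exists j, forall i, Rabs (X i - e j i) < delta.
Lemma dense_ex N : exists e : nat -> Pt N, dense e.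
Proof.
  induction N.
  - exists (fun n _ => q n). intros X d Hd. destruct (q_dense (X Fin.F1) d Hd) as [n Hn].
    exists n. intros i. pattern i; apply Fin.caseS'; [exact Hn|].
    intros p; apply (Fin.case0 (fun _ => _) p).
  - destruct IHN as [e He].
    exists (fun n i => Fin.caseS' i (fun _ => R) (q (fst (Cantor.of_nat n))) (fun j => e (snd (Cantor.of_nat n)) j)).
    intros X d Hd. destruct (q_dense (X Fin.F1) d Hd) as [a Ha].
    destruct (He (fun j => X (Fin.FS j)) d Hd) as [b Hb].
    exists (Cantor.to_nat (a,b)). intros i. rewrite Cantor.cancel_of_to. pattern i; apply Fin.caseS'; cbn; auto.
Qed.

Definition UCauchy (u : nat -> R -> R) := forall eps, 0<eps -> exists K, forall k l, (K<=k)%nat -> (K<=l)%nat -> forall x, Rabs (u k x - u l x) < eps.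

Lemma si_ge f : strictly_increasing f -> forall n, (n <= f n)%nat.
Proof. intros H n; induction n; [lia|]. specialize (H n); lia. Qed.
Lemma si_lt f : strictly_increasing f -> forall a b, (a < b)%nat -> (f a < f b)%nat.
Proof. intros H a b Hab; induction Hab. apply H. specialize (H m); lia. Qed.

Lemma diagonal (P : nat -> (nat -> nat) -> Prop) :
  (forall j sub, exists r, strictly_increasing r /\ P j (fun k => sub (r k))) ->
  exists d, strictly_increasing d /\ forall j, exists S, P j S /\
     forall k, (j <= k)%nat -> exists i, (k <= i)%nat /\ d k = S i.
Proof.
  intros H.
  set (r := fun j sub => proj1_sig (constructive_indefinite_description _ (H j sub))).
  assert (Hr : forall j sub, strictly_increasing (r j sub) /\ P j (fun k => sub (r j sub k))).
  { intros; unfold r; destruct (constructive_indefinite_description _ _); simpl; auto. }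
  clearbody r.
  set (T := fix T n := match n with O => fun k => r O (fun x => x) k
                                   | S n' => fun k => T n' (r (S n') (T n') k) end).
  assert (Tinc : forall n, strictly_increasing (T n)).
  { induction n; simpl; intros k.
    - apply (proj1 (Hr O (fun x => x))).
    - apply si_lt; auto. apply (proj1 (Hr _ _)). }
  assert (TP : forall n, P n (T n)).
  { destruct n; simpl. apply (proj2 (Hr O (fun x => x))). apply (proj2 (Hr _ _)). }
  assert (Ttail : forall j k, (j <= k)%nat -> exists g, (forall n, (n <= g n)%nat) /\ forall n, T k n = T j (g n)).
  { intros j k Hjk; induction Hjk.
    - exists (fun n => n); split; auto.
    - destruct IHHjk as [g [Hg1 Hg2]].
      exists (fun n => g (r (S m) (T m) n)); split.
      + intros n. pose proof (si_ge _ (proj1 (Hr (S m) (T m))) n). specialize (Hg1 (r (S m) (T m) n)). lia.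
      + intros n. simpl. apply Hg2. }
  exists (fun k => T k k). split.
  - intros k. simpl. apply si_lt; auto.
    pose proof (si_ge _ (proj1 (Hr (S k) (T k))) (S k)). lia.
  - intros j. exists (T j). split; auto.
    intros k Hk. destruct (Ttail j k Hk) as [g [Hg1 Hg2]]. exists (g k). split; auto.
Qed.

Lemma tri a b c e1 e2 : Rabs (a - b) < e1 -> Rabs (c - b) < e2 -> Rabs (a - c) < e1 + e2.
Proof. unfold Rabs; repeat destruct Rcase_abs; lra. Qed.

Lemma ucauchy_conv u : UCauchy u -> unif_conv u.
Proof.
  intros H.
  assert (Hc : forall x, Cauchy_crit (fun k => u k x)).
  { intros x eps Heps. destruct (H eps Heps) as [K HK]. exists K. intros n k Hn Hk.
    unfold Rdist. apply HK; lia. }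
  exists (fun x => proj1_sig (R_complete _ (Hc x))).
  intros eps Heps. destruct (H (eps/2)) as [K HK]; [lra|]. exists K. intros k Hk x.
  destruct (R_complete _ (Hc x)) as [l Hl]. simpl.
  destruct (Hl (eps/2)) as [N' HN']; [lra|].
  specialize (HN' (max K N') ltac:(lia)). unfold Rdist in HN'.
  specialize (HK k (max K N') Hk ltac:(lia) x).
  replace eps with (eps/2 + eps/2) by field.
  apply Rle_lt_trans with (Rabs (u k x - u (max K N') x) + Rabs (u (max K N') x - l)).
  - replace (u k x - l) with ((u k x - u (max K N') x) + (u (max K N') x - l)) by ring.
    apply Rabs_triang.
  - lra.
Qed.

Theorem mainTheorem10 (N : nat) (m : Fin.t (S N)) (phi : Pt N -> R) :
  UC phi -> ap_in_var m phi ->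
  forall s : nat -> R, exists sub : nat -> nat, strictly_increasing sub /\
    forall X : Pt N, unif_conv (fun k t => phi (setc m X (t + s (sub k)))).
Proof.
  intros Huc Hap s.
  destruct (dense_ex N) as [e He].
  set (P := fun j (sub : nat -> nat) => UCauchy (fun k t => phi (setc m (e j) (t + s (sub k))))).
  assert (Hyp : forall j sub, exists r, strictly_increasing r /\ P j (fun k => sub (r k))).
  { intros j sub. destruct (proj2 (Hap (e j)) (fun n => s (sub n))) as [r [Hr [h Hh]]].
    exists r; split; auto. intros eps Heps. destruct (Hh (eps/2)) as [K HK]; [lra|].
    exists K. intros k l Hk Hl t. pose proof (HK k Hk t). pose proof (HK l Hl t).
    cbv beta in *. replace eps with (eps/2+eps/2) by field. eapply tri; eauto. }
  destruct (diagonal P Hyp) as [d [Hd HdP]].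
  exists d. split; auto. intros X. apply ucauchy_conv.
  intros eps Heps. destruct (Huc (eps/3)) as [delta [Hdel Hcl]]; [lra|].
  destruct (He X delta Hdel) as [j Hj]. destruct (HdP j) as [S' [HS Htail]].
  destruct (HS (eps/3)) as [K HK]; [lra|].
  exists (max K j). intros k l Hk Hl t.
  destruct (Htail k ltac:(lia)) as [i [Hi Hdi]].
  destruct (Htail l ltac:(lia)) as [i' [Hi' Hdi']].
  rewrite Hdi, Hdi'.
  specialize (HK i i' ltac:(lia) ltac:(lia) t). cbv beta in HK.
  assert (Hclose : forall a, Rabs (phi (setc m X a) - phi (setc m (e j) a)) < eps/3).
  { intros a. apply Hcl. intros i0. unfold setc. destruct (Fin.eq_dec i0 m).
    - rewrite Rminus_eq_0, Rabs_R0; auto.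
    - auto. }
  pose proof (Hclose (t + s (S' i))). pose proof (Hclose (t + s (S' i'))).
  replace eps with (eps/3 + eps/3 + eps/3) by field.
  eapply tri; [ | apply H0].
  replace (phi (setc m X (t + s (S' i))) - phi (setc m (e j) (t + s (S' i'))))
    with ((phi (setc m X (t + s (S' i))) - phi (setc m (e j) (t + s (S' i)))) +
          (phi (setc m (e j) (t + s (S' i))) - phi (setc m (e j) (t + s (S' i'))))) by ring.
  eapply Rle_lt_trans; [apply Rabs_triang|]. lra.
Qed.
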